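(* Let $\delta>0$, $n\ge1$, let $w\in\mathbb{R}^n$ satisfy $w_1\ge w_2\ge\dots\ge w_n\ge0$, and let $\tilde w$ be its sparsification with respect to $P_{n,\delta}$. Then for every $v\in\mathbb{R}^n_{\ge0}$, $\mathrm{cost}(\tilde w;v)\le\mathrm{cost}(w;v)\le(1+\delta)\,\mathrm{cost}(\tilde w;v)$.
   Context: $P_{n,\delta}=\{\min\{\lceil(1+\delta)^s\rceil,n\}:s\in\mathbb{Z}_{\ge0}\}$; for $\ell\in P_{n,\delta}$ with $\ell<n$, $\mathrm{next}(\ell)$ is the smallest element of $P_{n,\delta}$ larger than $\ell$. The sparsification $\tilde w\in\mathbb{R}^n$ is defined by $\tilde w_i=w_i$ if $i\in P_{n,\delta}$, and $\tilde w_i=w_{\mathrm{next}(\ell)}$ if $\ell\in P_{n,\delta}$ and $\ell<i<\mathrm{next}(\ell)$. For a non-increasing $u$, $\mathrm{cost}(u;v)=\sum_{i=1}^n u_iv^\downarrow_i$, with $v^\downarrow$ the non-increasing rearrangement of $v$. *)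

(* Defs.v *)
From HB Require Import structures.
From mathcomp Require Import all_boot all_order all_algebra.
From mathcomp Require Import boolp reals.
Set Implicit Arguments. Unset Strict Implicit. Unset Printing Implicit Defensive.
Import Order.TTheory GRing.Theory Num.Theory.
Local Open Scope ring_scope.

(* Vectors in R^n are represented as functions nat -> R, using only the
   (1-based) indices 1..n. *)

Section Sparsification.
Variable R : realType.

Definition inP (n : nat) (delta : R) (l : nat) : bool :=
  `[< exists s : nat, (l%:Z) = Order.min (Num.ceil ((1 + delta) ^+ s)) (n%:Z) >].

(* next(l): the smallest element of P_{n,delta} larger than l
   (for l < n; n is always in P_{n,delta}, used as default). *)
Definition nextP (n : nat) (delta : R) (l : nat) : nat :=
  head n [seq j <- iota l.+1 (n - l) | inP n delta j].

Definition prevP (n : nat) (delta : R) (i : nat) : nat :=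
  last 0%N [seq j <- iota 1 i.-1 | inP n delta j].

(* sparsification: w~_i = w_i if i in P; otherwise w~_i = w_{next(l)} where
   l in P with l < i < next(l), i.e. l is the largest element of P below i. *)
Definition sparsify (n : nat) (delta : R) (w : nat -> R) (i : nat) : R :=
  if inP n delta i then w i else w (nextP n delta (prevP n delta i)).

Definition vdown (n : nat) (v : nat -> R) (i : nat) : R :=
  nth 0 (sort (fun x y : R => y <= x) [seq v j | j <- iota 1 n]) i.-1.

Definition cost (n : nat) (u v : nat -> R) : R :=
  \sum_(1 <= i < n.+1) u i * vdown n v i.

End Sparsification.

(* Main.v *)
Require Import Defs.
From HB Require Import structures.
From mathcomp Require Import all_boot all_order all_algebra.
From mathcomp Require Import boolp reals.
From mathcomp Require Import zify ring lra.
Import Order.TTheory GRing.Theory Num.Theory.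
Local Open Scope ring_scope.

Set Implicit Arguments.
Section Helpers.
Variable R : realType.

Lemma bern (d : R) (s : nat) : 0 <= d -> 1 + s%:R * d <= (1 + d) ^+ s.
Proof.
move=> d0; elim: s => [|s IH]; first by rewrite expr0 mul0r addr0.
rewrite exprS -natr1.
have h : 0 <= (s%:R : R) by apply: ler0n.
have := ler_wpM2l (_ : 0 <= 1 + d) IH.
move=> H; apply: le_trans (H _); last lra.
nra.
Qed.

Lemma unb (d x : R) : 0 < d -> exists s : nat, x < (1 + d) ^+ s.
Proof.
move=> d0; exists (Num.bound (`|x| / d)).
have := @archi_boundP R (`|x| / d) (divr_ge0 (normr_ge0 x) (ltW d0)).
rewrite ltr_pdivrMr // => H.
have := @bern d (Num.bound (`|x| / d)) (ltW d0).
have := ler_norm x.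
lra.
Qed.

Lemma pexp_mono (d : R) (s t : nat) : 0 <= d -> (s <= t)%N -> (1 + d) ^+ s <= (1 + d) ^+ t.
Proof.
move=> d0 st; apply: ler_weXn2l => //; lra.
Qed.

Lemma inP1 n (d : R) : (1 <= n)%N -> inP n d 1.
Proof.
move=> n1; apply/asboolP; exists 0%N; rewrite expr0 ceil1 min_l //.
Qed.

Lemma natzR (k : nat) : (k%:Z)%:~R = k%:R :> R.
Proof. by []. Qed.

Lemma inPn n (d : R) : 0 < d -> inP n d n.
Proof.
move=> d0; apply/asboolP; have [s hs] := @unb d n%:R d0; exists s.
rewrite min_r //.
apply: le_trans (le_ceil (ltW hs)).
by rewrite -natzR intrKceil.
Qed.


Lemma last_filter_iota (p : pred nat) k :
  (last 0%N [seq j <- iota 1 k | p j] <= k)%N /\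
  (forall j, (last 0%N [seq j <- iota 1 k | p j] < j <= k)%N -> ~~ p j).
Proof.
elim: k => [|k [IH1 IH2]]; first by split => // j; lia.
have -> : iota 1 k.+1 = iota 1 k ++ [:: k.+1] by rewrite -[k.+1]addn1 iotaD add1n addn1.
rewrite filter_cat /=.
case: ifP => pk /=.
  by rewrite last_cat /=; split => // j; lia.
rewrite cats0; split; first lia.
move=> j /andP[h1 h2]; case: (ltnP k j) => hj.
  have -> : j = k.+1 by lia.
  by rewrite pk.
by apply: IH2; rewrite h1.
Qed.

Lemma head_filter_iota (p : pred nat) d a c :
  (exists2 j, (a <= j < a + c)%N & p j) ->
  [/\ (a <= head d [seq j <- iota a c | p j] < a + c)%N,
      p (head d [seq j <- iota a c | p j]) &
      forall j, (a <= j < head d [seq j <- iota a c | p j])%N -> ~~ p j].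
Proof.
elim: c a => [|c IH] a [j hj pj]; first by exfalso; lia.
rewrite /= ; case: ifP => pa /=.
  by split => //; [lia | move=> i; lia].
have ex : exists2 j, (a.+1 <= j < a.+1 + c)%N & p j.
  exists j => //; case/andP: hj => h1 h2.
  have : j != a by apply/eqP => E; rewrite E pa in pj.
  lia.
have [h1 h2 h3] := IH a.+1 ex.
split => //; first lia.
move=> i hi; case: (ltnP a i) => ai.
  by apply: h3; lia.
have -> : i = a by lia.
by rewrite pa.
Qed.

Definition gidx n (d : R) i := if inP n d i then i else nextP n d (prevP n d i).

Lemma sparsifyE n (d : R) w i : sparsify n d w i = w (gidx n d i).
Proof. by rewrite /sparsify /gidx; case: ifP. Qed.

Lemma gidx_spec n (d : R) i : 0 < d -> (1 <= i <= n)%N ->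
  (i <= gidx n d i <= n)%N /\
  (forall q, inP n d q -> (i <= q <= n)%N -> (gidx n d i <= q)%N).
Proof.
move=> d0 hi; rewrite /gidx; case: ifP => Pi.
  by split; [lia | move=> q _; lia].
rewrite /nextP /prevP.
have [L1 L2] := last_filter_iota (inP n d) i.-1.
set l := last _ _ in L1 L2 *.
have ex : exists2 j, (l.+1 <= j < l.+1 + (n - l))%N & inP n d j.
  by exists n; [lia | apply: inPn].
have [H1 H2 H3] := @head_filter_iota (inP n d) n _ _ ex.
set h := head _ _ in H1 H2 H3 *.
have hi' : (i <= h)%N.
  case: (ltnP h i) => // hh.
  have := L2 h; rewrite H2; lia.
split; first lia.
move=> q Pq hq; case: (ltnP q h) => // qh.
have := H3 q; rewrite Pq; lia.
Qed.


Lemma vdown_ge0 n (v : nat -> R) i : (forall i : nat, (1 <= i <= n)%N -> 0 <= v i) ->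
  (1 <= i <= n)%N -> 0 <= vdown n v i.
Proof.
move=> v0 hi; rewrite /vdown.
set s := sort _ _.
have hs : size s = n by rewrite size_sort size_map size_iota.
have : nth 0 s i.-1 \in s by apply: mem_nth; rewrite hs; lia.
rewrite mem_sort => /mapP[j]; rewrite mem_iota => hj ->.
apply: v0; lia.
Qed.

Lemma vdown_mono n (v : nat -> R) i j : (1 <= i)%N -> (i <= j <= n)%N ->
  vdown n v j <= vdown n v i.
Proof.
move=> i1 hij; rewrite /vdown.
set s := sort _ _.
have hs : size s = n by rewrite size_sort size_map size_iota.
have srt : sorted (fun x y : R => y <= x) s.
  by apply: sort_sorted => x y; apply: le_total.
have tr : transitive (fun x y : R => y <= x).
  by move=> x y z /= h1 h2; apply: le_trans h2 h1.
have := @sorted_leq_nth _ _ tr (fun x => lexx x) 0 s srt i.-1 j.-1.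
rewrite !inE hs; apply; lia.
Qed.

Lemma exists_p n (d : R) m : 0 < d -> (1 <= m <= n)%N ->
  exists p : nat, [/\ (1 <= p <= m)%N, inP n d p & m%:R <= (1 + d) * p%:R].
Proof.
move=> d0 hm.
have [N hN] := @unb d m%:R d0.
pose P := fun s : nat => (1 + d) ^+ s <= m%:R.
have exP : exists s, P s by exists 0%N; rewrite /P expr0 ler1n; lia.
have ubP : forall s, P s -> (s <= N)%N.
  move=> s Ps; case: (leqP s N) => // sN.
  have := @pexp_mono d _ _ (ltW d0) (ltnW sN); rewrite /P in Ps; lra.
case: (ex_maxnP exP ubP) => s Ps smax.
have Ps1 : m%:R < (1 + d) ^+ s.+1.
  by rewrite ltNge; apply/negP => H; have := smax _ H; lia.
have a1 : 1 <= (1 + d) ^+ s by apply: exprn_ege1; lra.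
set c := Num.ceil ((1 + d) ^+ s).
have c0 : 0 <= c by rewrite ceil_ge0; lra.
have cm : c <= m%:Z by rewrite ceil_le_int natzR.
have c1 : 0 < c by rewrite ceil_gt0; lra.
exists `|c|%N; have ec : (`|c|%N)%:Z = c by rewrite gez0_abs.
split.
- apply/andP; split; first by rewrite -ltz_nat ec.
  by rewrite -lez_nat ec.
- apply/asboolP; exists s; rewrite ec min_l //.
  apply: le_trans cm _; by rewrite lez_nat; lia.
- have -> : (`|c|%N)%:R = c%:~R :> R by rewrite -natzR ec.
  have := ceil_ge ((1 + d) ^+ s); rewrite -/c => hc.
  rewrite exprS in Ps1.
  have : (1 + d) * (1 + d) ^+ s <= (1 + d) * c%:~R.
    by apply: ler_wpM2l => //; lra.
  lra.
Qed.

End Helpers.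

Theorem mainTheorem12 (R : realType) (delta : R) (n : nat) (w v : nat -> R) :
  0 < delta -> (1 <= n)%N ->
  (forall i : nat, (1 <= i)%N -> (i < n)%N -> w i.+1 <= w i) ->
  0 <= w n ->
  (forall i : nat, (1 <= i <= n)%N -> 0 <= v i) ->
  cost n (sparsify n delta w) v <= cost n w v /\
  cost n w v <= (1 + delta) * cost n (sparsify n delta w) v.
Proof.
move=> d0 n1 wmono wn v0.
set u := vdown n v.
have u0 : forall i, (1 <= i <= n)%N -> 0 <= u i by move=> i hi; apply: vdown_ge0.
have umono : forall i j, (1 <= i)%N -> (i <= j <= n)%N -> u j <= u i.
  by move=> i j; apply: vdown_mono.
have wmon : forall i j, (1 <= i)%N -> (i <= j <= n)%N -> w j <= w i.
  move=> i j i1 /andP[ij jn].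
  have : forall k, (i + k <= n)%N -> w (i + k)%N <= w i.
    elim=> [|k IH] hk; first by rewrite addn0.
    apply: le_trans (IH _); last lia.
    rewrite addnS; apply: wmono; lia.
  by move=> /(_ (j - i)%N); rewrite subnKC //; apply.
have spE : forall i, sparsify n delta w i = w (gidx R n delta i) by move=> i; apply: sparsifyE.
split.
  rewrite /cost; apply: ler_sum_nat => i hi.
  rewrite spE; apply: ler_wpM2r; first by apply: u0; lia.
  have hi2 : (1 <= i <= n)%N by lia.
  have [/andP[g1 g2] _] := @gidx_spec R n delta i d0 hi2.
  apply: wmon; lia.
pose w' j := if (j <= n)%N then w j else 0.
pose dd m := w' m - w' m.+1.
have dpos : forall m, (1 <= m <= n)%N -> 0 <= dd m.
  move=> m hm; rewrite /dd /w' (_ : (m <= n)%N = true); last lia.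
  case: ifP => h.
    rewrite subr_ge0; apply: wmono; lia.
  rewrite subr0; have -> : m = n by lia.
  done.
have wdec : forall k, (1 <= k <= n)%N ->
    w k = \sum_(1 <= m < n.+1) (if (k <= m)%N then dd m else 0).
  move=> k hk; rewrite (@big_cat_nat _ _ _ k) /=; [|lia|lia].
  rewrite (eq_big_nat _ _ (F2 := fun _ => 0)); last first.
    by move=> i hi; rewrite ifF //; lia.
  rewrite big1_eq add0r.
  rewrite (eq_big_nat _ _ (F2 := dd)); last by move=> i hi; rewrite ifT //; lia.
  have -> : \sum_(k <= m < n.+1) dd m = - \sum_(k <= m < n.+1) (w' m.+1 - w' m).
    by rewrite -sumrN; apply: eq_bigr => m _; rewrite opprB.
  rewrite telescope_sumr; last lia.
  rewrite /w' ltnn ifT; last lia.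
  by rewrite sub0r opprK.
have costW : cost n w v = \sum_(1 <= m < n.+1)
    dd m * \sum_(1 <= i < n.+1) (if (i <= m)%N then u i else 0).
  rewrite /cost.
  rewrite (eq_big_nat _ _ (F2 := fun i => \sum_(1 <= m < n.+1)
      (if (i <= m)%N then dd m else 0) * u i)); last first.
    by move=> i hi; rewrite (wdec i) ?mulr_suml //; lia.
  rewrite exchange_big_nat /=; apply: eq_bigr => m _.
  rewrite mulr_sumr; apply: eq_bigr => i _.
  by case: ifP; rewrite ?mul0r ?mulr0.
have costS : cost n (sparsify n delta w) v = \sum_(1 <= m < n.+1)
    dd m * \sum_(1 <= i < n.+1) (if (gidx R n delta i <= m)%N then u i else 0).
  rewrite /cost.
  rewrite (eq_big_nat _ _ (F2 := fun i => \sum_(1 <= m < n.+1)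
      (if (gidx R n delta i <= m)%N then dd m else 0) * u i)); last first.
    move=> i hi; have hi2 : (1 <= i <= n)%N by lia.
    have [/andP[g1 g2] _] := @gidx_spec R n delta i d0 hi2.
    by rewrite spE (wdec (gidx R n delta i)) ?mulr_suml //; lia.
  rewrite exchange_big_nat /=; apply: eq_bigr => m _.
  rewrite mulr_sumr; apply: eq_bigr => i _.
  by case: ifP; rewrite ?mul0r ?mulr0.
rewrite costW costS mulr_sumr; apply: ler_sum_nat => m hm.
rewrite mulrCA; apply: ler_wpM2l; first by apply: dpos; lia.
have hm2 : (1 <= m <= n)%N by lia.
have [p [hp Pp hmp]] := @exists_p R n delta m d0 hm2.
pose U k := \sum_(1 <= i < k.+1) u i.
have AU : \sum_(1 <= i < n.+1) (if (i <= m)%N then u i else 0) = U m.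
  rewrite (@big_cat_nat _ _ _ m.+1) /=; [|lia|lia].
  have -> : \sum_(m.+1 <= i < n.+1) (if (i <= m)%N then u i else 0) = 0.
    rewrite big_nat_cond big1 // => i /andP[/andP[h1 h2] _]; rewrite ifF //; lia.
  rewrite addr0.
  by apply: eq_big_nat => i hi; rewrite ifT //; lia.
have BU : U p <= \sum_(1 <= i < n.+1) (if (gidx R n delta i <= m)%N then u i else 0).
  rewrite (@big_cat_nat _ _ _ p.+1) /=; [|lia|lia].
  rewrite -[U p]addr0; apply: lerD.
    apply: ler_sum_nat => i hi.
    have hi2 : (1 <= i <= n)%N by lia.
    have [_ gmin] := @gidx_spec R n delta i d0 hi2.
    have hip : (i <= p <= n)%N by lia.
    have := gmin p Pp hip => gp.
    by rewrite ifT //; lia.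
  rewrite big_nat_cond; apply: sumr_ge0 => i /andP[/andP[h1 h2] _].
  by case: ifP => _ //; apply: u0; lia.
have Up0 : 0 <= U p.
  rewrite /U big_nat_cond; apply: sumr_ge0 => i /andP[/andP[h1 h2] _].
  apply: u0; lia.
have up0 : 0 <= u p by apply: u0; lia.
have key : p%:R * U m <= m%:R * U p.
  have spl : U m = U p + \sum_(p.+1 <= i < m.+1) u i.
    by rewrite /U (@big_cat_nat _ _ _ p.+1) //; lia.
  have h1 : \sum_(p.+1 <= i < m.+1) u i <= (m - p)%:R * u p.
    rewrite mulr_natl (_ : u p *+ (m - p) = \sum_(p.+1 <= i < m.+1) u p); last first.
      by rewrite sumr_const_nat subSS.
    apply: ler_sum_nat => i hi; apply: umono; lia.
  have h2 : p%:R * u p <= U p.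
    rewrite mulr_natl (_ : u p *+ p = \sum_(1 <= i < p.+1) u p); last first.
      by rewrite sumr_const_nat subn1.
    apply: ler_sum_nat => i hi; apply: umono; lia.
  rewrite natrB in h1; last lia.
  have p0 : 0 <= (p%:R : R) by apply: ler0n.
  have mp0 : 0 <= (m%:R : R) - p%:R by rewrite subr_ge0 ler_nat; lia.
  have h3 := ler_wpM2l p0 h1.
  have h4 := ler_wpM2l mp0 h2.
  rewrite spl; nra.
rewrite AU.
have p0 : 0 < (p%:R : R) by rewrite ltr0n; lia.
have h5 : U m <= (1 + delta) * U p.
  rewrite -(ler_pM2l p0).
  have := ler_wpM2r Up0 hmp.
  nra.
apply: le_trans h5 _; apply: ler_wpM2l => //; lra.
Qed.
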